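(* Let $I\subset\mathbb{R}$ be an open interval, $\lambda\in\mathbb{R}$, and let $x_1,x_2,x_3:I\to\mathbb{R}$ be smooth functions with $x_3(u)\neq0$ and $x_3'(u)\neq 0$ for all $u$, such that the curve $\gamma(u)=(x_1(u),x_2(u),x_3(u),\lambda x_3(u))$ is parametrized by arclength. Let $M$ be the knotted sphere with position vector $$X(u,v)=\big(x_1(u),\,x_2(u),\,x_3(u)(\cos v-\lambda\sin v),\,x_3(u)(\sin v+\lambda\cos v)\big).$$ Then the conjugate surface $\widetilde M$, given by the Laplace transform $X_{-1}=X-\frac{1}{\Gamma_{12}^2}X_u$, lies in the rotation plane $\Pi=\{x\in\mathbb{E}^4: x_3=x_4=0\}$.
   Context: For a surface $X(u,v)$ with first fundamental form $E,F,G$, the Christoffel symbols $\Gamma_{ij}^k$ are defined by the Gauss formula: the tangential part of $X_{uv}$ equals $\Gamma_{12}^1X_u+\Gamma_{12}^2X_v$. The Laplace transform $X_{-1}$ of the surface is $X_{-1}=X-X_u/\Gamma_{12}^2$ (defined where $\Gamma_{12}^2\neq0$); for this surface $\Gamma_{12}^2=x_3'/x_3$. *)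

(* Defs.v *)
From Stdlib Require Import Reals.
From Coquelicot Require Import Coquelicot.
Open Scope R_scope.

(* A point of E^4 is represented by its coordinate function; coordinates are
   indexed 0,1,2,3 (paper's x_1,...,x_4). Only indices < 4 are ever used. *)
Definition pt4 := nat -> R.

Definition dot4 (a b : pt4) : R := a 0%nat * b 0%nat + a 1%nat * b 1%nat
  + a 2%nat * b 2%nat + a 3%nat * b 3%nat.

Definition surf := R -> R -> pt4.

Definition Xu (X : surf) : surf := fun u v i => Derive (fun s => X s v i) u.
Definition Xv (X : surf) : surf := fun u v i => Derive (fun t => X u t i) v.
Definition Xuv (X : surf) : surf := fun u v i => Derive (fun t => Xu X u t i) v.

Definition fffE (X : surf) u v := dot4 (Xu X u v) (Xu X u v).
Definition fffF (X : surf) u v := dot4 (Xu X u v) (Xv X u v).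
Definition fffG (X : surf) u v := dot4 (Xv X u v) (Xv X u v).

(* Christoffel symbol Gamma_{12}^2 from the Gauss formula: the tangential part
   of X_uv is Gamma_{12}^1 X_u + Gamma_{12}^2 X_v; solving the 2x2 system
   <T,X_u> = <X_uv,X_u>, <T,X_v> = <X_uv,X_v> by Cramer's rule. *)
Definition Gamma12_2 (X : surf) u v :=
  (fffE X u v * dot4 (Xuv X u v) (Xv X u v)
   - fffF X u v * dot4 (Xuv X u v) (Xu X u v))
  / (fffE X u v * fffG X u v - fffF X u v ^ 2).

Definition laplace_m1 (X : surf) : surf :=
  fun u v i => X u v i - Xu X u v i / Gamma12_2 X u v.

Definition knotX (lam : R) (x1 x2 x3 : R -> R) : surf :=
  fun u v i => match i with
    | 0%nat => x1 u
    | 1%nat => x2 u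
    | 2%nat => x3 u * (cos v - lam * sin v)
    | _ => x3 u * (sin v + lam * cos v)
    end.

Definition in_open_interval (a b : Rbar) (u : R) : Prop :=
  Rbar_lt a u /\ Rbar_lt u b.

Definition smooth_on (I : R -> Prop) (f : R -> R) : Prop :=
  forall (n : nat) (u : R), I u -> ex_derive_n f n u.

(* Main.v *)
Require Import Defs.
From Stdlib Require Import Reals Lra.
From Coquelicot Require Import Coquelicot.
Open Scope R_scope.

Lemma Xu_knot lam x1 x2 x3 u v :
  Xu (knotX lam x1 x2 x3) u v 0%nat = Derive x1 u /\
  Xu (knotX lam x1 x2 x3) u v 1%nat = Derive x2 u /\
  Xu (knotX lam x1 x2 x3) u v 2%nat = Derive x3 u * (cos v - lam * sin v) /\
  Xu (knotX lam x1 x2 x3) u v 3%nat = Derive x3 u * (sin v + lam * cos v).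
Proof.
  unfold Xu, knotX; repeat split.
  - apply Derive_scal_l.
  - apply Derive_scal_l.
Qed.

Lemma dcs (k lam v : R) :
  Derive (fun t => k * (cos t - lam * sin t)) v = k * (- sin v - lam * cos v) /\
  Derive (fun t => k * (sin t + lam * cos t)) v = k * (cos v - lam * sin v).
Proof.
  split; apply is_derive_unique; auto_derive; auto; ring.
Qed.

Theorem proposition9 (a b : Rbar) (lam : R) (x1 x2 x3 : R -> R) :
  Rbar_lt a b ->
  smooth_on (in_open_interval a b) x1 ->
  smooth_on (in_open_interval a b) x2 ->
  smooth_on (in_open_interval a b) x3 ->
  (forall u, in_open_interval a b u -> x3 u <> 0) ->
  (forall u, in_open_interval a b u -> Derive x3 u <> 0) ->
  (* gamma(u) = (x1, x2, x3, lam x3) is parametrized by arclength *)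
  (forall u, in_open_interval a b u ->
     Derive x1 u ^ 2 + Derive x2 u ^ 2 + Derive x3 u ^ 2
     + Derive (fun s => lam * x3 s) u ^ 2 = 1) ->
  forall u v, in_open_interval a b u ->
    Gamma12_2 (knotX lam x1 x2 x3) u v <> 0 /\
    laplace_m1 (knotX lam x1 x2 x3) u v 2%nat = 0 /\
    laplace_m1 (knotX lam x1 x2 x3) u v 3%nat = 0.
Proof.
  intros _ _ _ _ H3 Hd3 Harc u v Hu.
  set (X := knotX lam x1 x2 x3).
  pose proof (H3 u Hu) as h3. pose proof (Hd3 u Hu) as hd3.
  pose proof (Harc u Hu) as ha. rewrite Derive_scal in ha.
  set (d1 := Derive x1 u) in *. set (d2 := Derive x2 u) in *.
  set (d3 := Derive x3 u) in *.
  assert (HXu : forall t, Xu X u t 0%nat = d1 /\ Xu X u t 1%nat = d2 /\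
    Xu X u t 2%nat = d3 * (cos t - lam * sin t) /\
    Xu X u t 3%nat = d3 * (sin t + lam * cos t)) by (intro t; apply Xu_knot).
  destruct (HXu v) as [u0 [u1 [u2 u3]]].
  destruct (dcs (x3 u) lam v) as [c2 c3].
  destruct (dcs d3 lam v) as [e2 e3].
  assert (v0 : Xv X u v 0%nat = 0) by (unfold Xv, X, knotX; apply Derive_const).
  assert (v1 : Xv X u v 1%nat = 0) by (unfold Xv, X, knotX; apply Derive_const).
  assert (v2 : Xv X u v 2%nat = x3 u * (- sin v - lam * cos v)) by (unfold Xv, X, knotX; exact c2).
  assert (v3 : Xv X u v 3%nat = x3 u * (cos v - lam * sin v)) by (unfold Xv, X, knotX; exact c3).
  assert (w0 : Xuv X u v 0%nat = 0).
  { unfold Xuv. rewrite (Derive_ext _ (fun _ => d1)); [apply Derive_const|].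
    intro t; apply HXu. }
  assert (w1 : Xuv X u v 1%nat = 0).
  { unfold Xuv. rewrite (Derive_ext _ (fun _ => d2)); [apply Derive_const|].
    intro t; apply HXu. }
  assert (w2 : Xuv X u v 2%nat = d3 * (- sin v - lam * cos v)).
  { unfold Xuv. rewrite (Derive_ext _ (fun t => d3 * (cos t - lam * sin t))); [exact e2|].
    intro t; apply HXu. }
  assert (w3 : Xuv X u v 3%nat = d3 * (cos v - lam * sin v)).
  { unfold Xuv. rewrite (Derive_ext _ (fun t => d3 * (sin t + lam * cos t))); [exact e3|].
    intro t; apply HXu. }
  pose proof (sin2_cos2 v) as sc. unfold Rsqr in sc.
  assert (HE : fffE X u v = 1).
  { unfold fffE, dot4. rewrite u0, u1, u2, u3. rewrite <- ha. ring_simplify.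
    replace (sin v ^ 2) with (1 - cos v ^ 2) by (simpl; lra). ring. }
  assert (HF : fffF X u v = 0).
  { unfold fffF, dot4. rewrite u0, u1, u2, u3, v0, v1, v2, v3. ring. }
  assert (HG : fffG X u v = x3 u ^ 2 * (1 + lam ^ 2)).
  { unfold fffG, dot4. rewrite v0, v1, v2, v3. ring_simplify.
    replace (sin v ^ 2) with (1 - cos v ^ 2) by (simpl; lra). ring. }
  assert (Hl : 1 + lam ^ 2 <> 0) by nra.
  assert (HGam : Gamma12_2 X u v = d3 / x3 u).
  { unfold Gamma12_2. rewrite HE, HF, HG. unfold dot4.
    rewrite w0, w1, w2, w3, v0, v1, v2, v3.
    transitivity (d3 * x3 u * (1 + lam ^ 2) * (sin v * sin v + cos v * cos v) / (1 * (x3 u ^ 2 * (1 + lam ^ 2)) - 0 ^ 2)).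
    { unfold Rdiv; f_equal; ring. }
    rewrite sc. field. split; auto. }
  split; [|split].
  - rewrite HGam. unfold Rdiv. apply Rmult_integral_contrapositive; split; auto.
    apply Rinv_neq_0_compat; auto.
  - unfold laplace_m1. rewrite HGam, u2. unfold X, knotX. field. auto.
  - unfold laplace_m1. rewrite HGam, u3. unfold X, knotX. field. auto.
Qed.
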